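(* Let $G$ be a finite abstract simplicial complex with connection matrix $L$. Then $\mathrm{str}(L^{-1})=\chi(G)$, where $\mathrm{str}(M)=\sum_{x\in G}\omega(x)M(x,x)$.
   Context: A finite abstract simplicial complex $G$ is a finite set of non-empty finite sets closed under taking non-empty subsets. $\omega(x)=(-1)^{|x|-1}$, $\chi(G)=\sum_{x\in G}\omega(x)$. The connection matrix $L$ is indexed by simplices with $L(x,y)=1$ if $x\cap y\neq\emptyset$ and $0$ otherwise; it is invertible. *)

(* Defs.v *)
From mathcomp Require Import all_boot all_order all_algebra.
Set Implicit Arguments. Unset Strict Implicit. Unset Printing Implicit Defensive.
Import GRing.Theory Num.Theory.
Local Open Scope ring_scope.

Definition simplicial_complex (T : finType) (G : {set {set T}}) : Prop :=
  (forall x : {set T}, x \in G -> x != set0) /\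
  (forall x y : {set T}, x \in G -> y \subset x -> y != set0 -> y \in G).

Definition omega (T : finType) (x : {set T}) : rat := (-1) ^+ (#|x|.-1).

Definition euler_char (T : finType) (G : {set {set T}}) : rat :=
  \sum_(x in G) omega x.

Definition simplex (T : finType) (G : {set {set T}}) (i : 'I_#|G|) : {set T} :=
  @enum_val _ (pred_of_set G) i.

Definition connection_matrix (T : finType) (G : {set {set T}}) : 'M[rat]_#|G| :=
  \matrix_(i, j) (if simplex i :&: simplex j != set0 then 1 else 0).

Definition supertrace (T : finType) (G : {set {set T}}) (M : 'M[rat]_#|G|) : rat :=
  \sum_(i < #|G|) omega (simplex i) * M i i.

(* Main.v *)
Require Import Defs.
From mathcomp Require Import all_boot all_order all_algebra.
From mathcomp Require Import lra.
Set Implicit Arguments. Unset Strict Implicit. Unset Printing Implicit Defensive.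
Import GRing.Theory Num.Theory.
Local Open Scope ring_scope.

Section S.
Variable T : finType.

Definition sgn (x : {set T}) : rat := (-1) ^+ #|x|.

Lemma omegaE (x : {set T}) : x != set0 -> omega x = - sgn x.
Proof.
rewrite /omega /sgn -card_gt0 => h.
by rewrite -{2}(prednK h) exprS mulN1r opprK.
Qed.

Lemma toggle_sum (W X : {set T}) : W \proper X ->
  \sum_(x : {set T} | (W \subset x) && (x \subset X)) sgn x = 0.
Proof.
case/properP => sWX [a aX naW].
pose h (x : {set T}) := if a \in x then x :\ a else a |: x.
have hK : involutive h.
  move=> x; rewrite /h; case: (boolP (a \in x)) => ax.
  - by rewrite setD11 setD1K.
  - by rewrite setU11 setU1K.
have hinj : injective h := inv_inj hK.
set S := (X in X = 0).
have : S = - S.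
  rewrite {1}/S (reindex_inj hinj) /= -sumrN.
  apply: eq_big => x.
    rewrite /h; case: (boolP (a \in x)) => ax.
    - rewrite subsetD1 naW andbT; congr andb.
      apply/idP/idP => [H|H]; last exact: subset_trans (subD1set _ _) H.
      by rewrite -(setD1K ax) subUset sub1set aX H.
    - rewrite subUset sub1set aX /=; congr andb.
      apply/idP/idP => [H|H]; last exact: subset_trans H (subsetUr _ _).
      apply/subsetP => y yW; move/subsetP: H => /(_ y yW).
      rewrite in_setU1 => /orP [/eqP ya|//].
      by rewrite -ya yW in naW.
  move=> _; rewrite /h /sgn; case: (boolP (a \in x)) => ax.
  - by rewrite -{2}(setD1K ax) cardsU1 in_setD1 eqxx /= exprS mulN1r opprK.
  - by rewrite cardsU1 ax /= exprS mulN1r.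
move=> H; lra.
Qed.

Lemma omega2 (x : {set T}) : omega x * omega x = 1.
Proof. by rewrite /omega -exprMn mulrNN mulr1 expr1n. Qed.

Lemma sum_sub (U : {set T}) : U != set0 ->
  \sum_(x : {set T} | (x \subset U) && (x != set0)) omega x = 1.
Proof.
move=> U0; have := toggle_sum (W:=set0) (X:=U); rewrite proper0 U0 => /(_ isT).
rewrite (bigD1 set0) ?sub0set //= /sgn cards0 expr0.
rewrite (eq_bigl (fun x : {set T} => (x \subset U) && (x != set0))); last by move=> x; rewrite sub0set.
rewrite (eq_bigr (fun x : {set T} => - omega x)); last by move=> x /andP [_ h]; rewrite omegaE // opprK.
rewrite sumrN => H; lra.
Qed.

Variable G : {set {set T}}.
Hypothesis hG : simplicial_complex G.

Local Notation s := (@simplex T G).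
Local Notation n := #|G|.

Lemma sG i : s i \in G. Proof. exact: enum_valP. Qed.
Lemma s0 i : s i != set0. Proof. exact: (proj1 hG _ (sG i)). Qed.

Lemma sum_G (F : {set T} -> rat) : \sum_(i < n) F (s i) = \sum_(x in G) F x.
Proof. by rewrite [RHS](big_enum_val (A:=pred_of_set G)). Qed.

Lemma E1 i j : \sum_(k < n) (s k \subset s i)%:R * omega (s k) * (s k \subset s j)%:R
  = (s i :&: s j != set0)%:R.
Proof.
rewrite (sum_G (fun x => (x \subset s i)%:R * omega x * (x \subset s j)%:R)).
transitivity (\sum_(x : {set T} | (x \subset s i :&: s j) && (x != set0)) omega x).
  rewrite big_mkcond [RHS]big_mkcond; apply: eq_bigr => x _ /=.
  rewrite subsetI.
  case: (boolP (x \subset s i)) => hi; case: (boolP (x \subset s j)) => hj /=;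
    rewrite ?mul0r ?mulr0 ?if_same //.
  case: (boolP (x \in G)) => xG.
    by rewrite ((proj1 hG) _ xG) mulr1 mul1r.
  case: (boolP (x != set0)) => // x0.
  by rewrite ((proj2 hG) _ _ (sG i) hi x0) in xG.
case: (boolP (s i :&: s j != set0)) => U0; first by rewrite sum_sub.
move/negPn/eqP: U0 => U0.
by rewrite big_pred0 // => x; rewrite U0 subset0 andbN.
Qed.

Lemma E2 w x : \sum_(k < n) (s w \subset s k)%:R * omega (s k) * (s k \subset s x)%:R
  = omega (s w) * (w == x)%:R.
Proof.
rewrite (sum_G (fun y => (s w \subset y)%:R * omega y * (y \subset s x)%:R)).
transitivity (\sum_(y : {set T} | (s w \subset y) && (y \subset s x)) omega y).
  rewrite big_mkcond [RHS]big_mkcond; apply: eq_bigr => y _ /=.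
  case: (boolP (s w \subset y)) => hi; case: (boolP (y \subset s x)) => hj /=;
    rewrite ?mul0r ?mulr0 ?if_same //.
  case: (boolP (y \in G)) => yG.
    by rewrite mulr1 mul1r.
  have y0 : y != set0.
    apply: contraNneq (s0 w) => y0; by rewrite -subset0 -y0.
  by rewrite ((proj2 hG) _ _ (sG x) hj y0) in yG.
case: (eqVneq w x) => [<-|ne].
  rewrite mulr1; apply: big_pred1 => y /=.
  by rewrite eq_sym eqEsubset andbC.
rewrite mulr0.
case: (boolP (s w \subset s x)) => h; last first.
  rewrite big_pred0 // => y; apply: contraNF h => /andP [h1 h2].
  exact: subset_trans h1 h2.
have pr : s w \proper s x.
  rewrite properEneq h andbT; apply: contra ne => /eqP e.
  by apply/eqP; apply: enum_val_inj.
rewrite (eq_bigr (fun y : {set T} => - sgn y)).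
  by rewrite sumrN toggle_sum // oppr0.
move=> y /andP [h1 _]; rewrite omegaE //.
apply: contraNneq (s0 w) => y0; by rewrite -subset0 -y0.
Qed.

Definition Amx : 'M[rat]_n := \matrix_(i, j) ((s i \subset s j)%:R).
Definition Dmx : 'M[rat]_n := diag_mx (\row_i omega (s i)).

Lemma Lfact : connection_matrix G = Amx^T *m Dmx *m Amx.
Proof.
apply/matrixP => i j; rewrite /Dmx mul_mx_diag !mxE.
under eq_bigr => k _ do rewrite !mxE.
rewrite E1; by case: ifP.
Qed.

Lemma ADAD : Amx *m Dmx *m Amx *m Dmx = 1%:M.
Proof.
apply/matrixP => w x; rewrite /Dmx mul_mx_diag !mxE.
under eq_bigr => k _ do rewrite mul_mx_diag !mxE.
rewrite E2; case: (eqVneq w x) => [->|ne]; first by rewrite mulr1 omega2.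
by rewrite mulr0 mul0r.
Qed.

Lemma DD : Dmx *m Dmx = 1%:M.
Proof.
apply/matrixP => i j; rewrite /Dmx mul_mx_diag !mxE.
case: (eqVneq i j) => [->|ne]; last by rewrite mulr0n mul0r.
by rewrite mulr1n omega2.
Qed.

Definition gmx := Dmx *m Amx *m Dmx *m Amx^T *m Dmx.

Lemma Lg : connection_matrix G *m gmx = 1%:M.
Proof.
have -> : connection_matrix G *m gmx =
   Amx^T *m Dmx *m (Amx *m Dmx *m Amx *m Dmx) *m Amx^T *m Dmx.
  by rewrite Lfact /gmx !mulmxA.
rewrite ADAD mulmx1.
have DADA : Dmx *m Amx *m Dmx *m Amx = 1%:M.
  apply: mulmx1C; rewrite -ADAD !mulmxA //.
have := congr1 trmx DADA; rewrite !trmx_mul trmx1 /Dmx tr_diag_mx !mulmxA.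
by [].
Qed.

Lemma invL : invmx (connection_matrix G) = gmx.
Proof.
have [Lu _] := mulmx1_unit Lg.
by rewrite -[gmx]mul1mx -(mulVmx Lu) -mulmxA Lg mulmx1.
Qed.

Lemma main : supertrace (invmx (connection_matrix G)) = euler_char G.
Proof.
rewrite invL.
have -> : supertrace gmx = \tr (Dmx *m gmx).
  rewrite /supertrace /mxtrace; apply: eq_bigr => i _.
  by rewrite /Dmx mul_diag_mx !mxE.
have -> : Dmx *m gmx = Amx *m (Dmx *m Amx^T *m Dmx).
  by rewrite /gmx !mulmxA DD mul1mx.
rewrite mxtrace_mulC.
have -> : Dmx *m Amx^T *m Dmx *m Amx = Dmx *m connection_matrix G.
  by rewrite Lfact !mulmxA.
rewrite /mxtrace /euler_char -sum_G; apply: eq_bigr => i _.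
rewrite /Dmx mul_diag_mx !mxE setIid s0 mulr1.
by [].
Qed.
End S.

Theorem mainTheorem11 (T : finType) (G : {set {set T}}) :
  simplicial_complex G ->
  supertrace (invmx (connection_matrix G)) = euler_char G.
Proof. move=> hG; exact: main hG. Qed.
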